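(* In the setting of the context, define the operators on $\mathbb{C}^{2^n}$ $$\hat A:=\sum_{j=0}^{2^n-1}\sum_{q=0}^{2^n-1}\langle\phi_q|\chi_j\rangle\,e^{-i\theta_j}\,|q\rangle\langle j|,$$ $$\hat A':=\sum_{c_1=0}^{d-1}\sum_{c_2=0}^{d-1}\ \sum_{j:(0,j)\in V(G^{(c_1,c_2)})}\ \frac{1}{2^B}\sum_{b=0}^{2^B-1} g(j,c_1,b)\,e^{i\arg\langle\phi_{f(0,j,c_1)}|\chi_j\rangle-i\theta_j}\,|f(0,j,c_1)\rangle\langle j|,$$ where $g(j,c_1,b)=1$ if $b<k_{j,f(0,j,c_1)}$ and $g(j,c_1,b)=(-1)^b$ otherwise. Then $$\|\hat A'-\hat A\|\le\frac{2d^2}{2^B},$$ where $\|\cdot\|$ is the spectral norm.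
   Context: $n,d,B$ are positive integers. $\{|\chi_j\rangle\}_{j=0}^{2^n-1}$ and $\{|\phi_q\rangle\}_{q=0}^{2^n-1}$ are orthonormal bases of $\mathbb{C}^{2^n}$, $\{|j\rangle\}$ denotes the computational basis, and $\theta_j\in\mathbb{R}$ are arbitrary phases. $d$-sparsity: for every $j$ at most $d$ indices $q$ have $\langle\phi_q|\chi_j\rangle\ne0$, and for every $q$ at most $d$ indices $j$ have $\langle\phi_q|\chi_j\rangle\ne0$. Padded index function $f$: for fixed $j$, list all $q$ with $\langle\phi_q|\chi_j\rangle\ne0$ in increasing order, padded by further distinct indices to exactly $d$ distinct entries, and let $f(0,j,p)$ be the $p$-th entry ($p=0,\dots,d-1$); symmetrically $f(1,q,p)$ is the $p$-th entry of the padded increasing list of $j$ with $\langle\phi_q|\chi_j\rangle\ne0$. Graph $G$: bipartite with vertices $\{0,1\}\times\{0,\dots,2^n-1\}$ and edges $((0,j),(1,q))$ whenever $\langle\phi_q|\chi_j\rangle\ne0$; the edge $((0,j),(1,q))$ has colour $(c_1,c_2)$ where $f(0,j,c_1)=q$ and $f(1,q,c_2)=j$. $G^{(c_1,c_2)}$ is the subgraph formed by edges of colour $(c_1,c_2)$, and $V(G^{(c_1,c_2)})$ is the set of vertices incident to such edges. $\arg$ of a nonzero complex number is its argument. For each pair $(j,q)$, $k_{j,q}\in\{0,1,\dots,2^B\}$ is a $B$-bit rounding of $2^B|\langle\phi_q|\chi_j\rangle|$, i.e. an integer with $\bigl|2^B|\langle\phi_q|\chi_j\rangle|-k_{j,q}\bigr|\le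 1$. *)

(* Defs.v *)
From mathcomp Require Import all_boot all_algebra complex.
From mathcomp Require Import classical_sets reals trigo.
Set Implicit Arguments. Unset Strict Implicit. Unset Printing Implicit Defensive.
Import GRing.Theory Num.Theory.
Local Open Scope ring_scope.

Section Defs.
Variable R : realType.
Local Notation C := R[i].

Definition cabs (z : C) : R := Num.sqrt (complex.Re z ^+ 2 + complex.Im z ^+ 2).

Definition cinner N (u v : 'cV[C]_N) : C := \sum_(k < N) (u k 0)^* * v k 0.

Definition vnorm N (v : 'cV[C]_N) : R := Num.sqrt (\sum_(k < N) cabs (v k 0) ^+ 2).

Definition specnorm m N (A : 'M[C]_(m, N)) : R :=
  sup [set vnorm (A *m x) | x in [set x : 'cV[C]_N | vnorm x <= 1]].

Definition expi (t : R) : C := Complex (cos t) (sin t).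

(* e^{i arg z} for z <> 0 *)
Definition phase (z : C) : C := z / `|z|.

Definition orthonormal_fam N (v : 'I_N -> 'cV[C]_N) :=
  forall i j, cinner (v i) (v j) = (i == j)%:R.

End Defs.

(* the two sides of the bipartite graph *)
Definition side0 : 'I_2 := ord0.
Definition side1 : 'I_2 := ord_max.

(* h : 'I_d -> 'I_N is the list of all indices satisfying P, in increasing
   order, padded by further distinct indices to exactly d distinct entries *)
Definition padded_list N d (P : pred 'I_N) (h : 'I_d -> 'I_N) :=
  injective h /\
  forall p : 'I_d, (p < size [seq q <- enum 'I_N | P q])%N ->
    nat_of_ord (h p) = nth 0%N [seq nat_of_ord q | q <- enum 'I_N & P q] p.

(* Main.v *)
Require Import Defs.
From mathcomp Require Import all_boot all_order all_algebra complex.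
From mathcomp Require Import classical_sets reals trigo.
From mathcomp Require Import ring lra.
Import Order.TTheory GRing.Theory Num.Theory.
Local Open Scope ring_scope.

Section H.
Variable R : realType.
Local Notation C := R[i].
Local Open Scope complex_scope.

Lemma cabsE (z : C) : (cabs z)%:C = `|z|.
Proof. by rewrite normc_def. Qed.

Lemma row_bound (N : nat) (M : 'M[C]_N) (x : 'cV[C]_N) (T : {set 'I_N}) (e : R) q :
 (forall j, `|M q j| <= e%:C) -> (forall j, j \notin T -> M q j = 0) ->
 cabs ((M *m x) q 0) <= e * \sum_(j in T) cabs (x j 0).
Proof.
move=> he hT.
rewrite -lecR cabsE rmorphM /= rmorph_sum /=.
under [X in _ <= _ * X]eq_bigr do rewrite cabsE.
rewrite mxE (bigID (mem T)) /= [X in _ + X]big1 ?addr0; last first.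
  by move=> j hj; rewrite hT ?mul0r.
apply: (le_trans (ler_norm_sum _ _ _)).
rewrite mulr_sumr; apply: ler_sum => j _.
by rewrite normrM ler_wpM2r.
Qed.
Lemma cs_sum (I : finType) (A : {set I}) (a : I -> R) :
  (\sum_(i in A) a i)^+2 <= #|A|%:R * \sum_(i in A) a i ^+ 2.
Proof.
have H0 : 0 <= \sum_(i in A) \sum_(j in A) (a i - a j)^+2.
  by apply: sumr_ge0 => i _; apply: sumr_ge0 => j _; apply: sqr_ge0.
have H1 : \sum_(i in A) \sum_(j in A) (a i - a j)^+2
    = \sum_(i in A) (#|A|%:R * a i ^+ 2 + \sum_(j in A) a j ^+ 2 - 2 * a i * \sum_(j in A) a j).
  apply: eq_bigr => i _.
  have e : forall j, (a i - a j)^+2 = (a i ^+ 2 + a j ^+ 2) - (2 * a i) * a j.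
    by move=> j; ring.
  under eq_bigr do rewrite e.
  rewrite sumrB big_split /= sumr_const -mulr_sumr; ring.
rewrite H1 sumrB big_split /= sumr_const -mulr_sumr -mulr_suml -mulr_sumr in H0.
nra.
Qed.

Lemma cabs_ge0 (z : C) : 0 <= cabs z.
Proof. exact: sqrtr_ge0. Qed.

Lemma sparse_norm (N d : nat) (M : 'M[C]_N) (S : 'I_N -> 'I_N -> bool) (e : R) :
  0 <= e -> (forall q j, `|M q j| <= e%:C) -> (forall q j, M q j != 0 -> S q j) ->
  (forall q, #|[set j | S q j]| <= d)%N -> (forall j, #|[set q | S q j]| <= d)%N ->
  forall x : 'cV[C]_N, vnorm (M *m x) <= d%:R * e * vnorm x.
Proof.
move=> e0 he hS hr hc x.
set a := fun j => cabs (x j 0).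
have a0 : forall j, 0 <= a j by move=> j; exact: cabs_ge0.
have st1 : forall q, cabs ((M *m x) q 0) ^+ 2
    <= d%:R * e ^+ 2 * \sum_(j in [set j | S q j]) a j ^+ 2.
  move=> q.
  have h1 : cabs ((M *m x) q 0) <= e * \sum_(j in [set j | S q j]) a j.
    apply: row_bound => // j; rewrite inE => hj.
    by case: (eqVneq (M q j) 0) => // /hS; rewrite (negbTE hj).
  have h2 := @cs_sum _ [set j | S q j] a.
  have h3 : (#|[set j | S q j]|%:R : R) <= d%:R by rewrite ler_nat.
  have h4 : 0 <= \sum_(j in [set j | S q j]) a j ^+ 2 by apply: sumr_ge0 => j _; apply: sqr_ge0.
  have h5 : 0 <= \sum_(j in [set j | S q j]) a j by apply: sumr_ge0.
  have h6 := cabs_ge0 ((M *m x) q 0).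
  set X := \sum_(j in [set j | S q j]) a j ^+ 2 in h2 h4 *.
  set Y := \sum_(j in [set j | S q j]) a j in h1 h2 h5.
  set c := cabs _ in h1 h6 *.
  set t := (#|_|%:R : R) in h2 h3.
  have : c ^+ 2 <= (e * Y) ^+ 2 by rewrite ler_sqr ?nnegrE ?mulr_ge0.
  have : e ^+ 2 * Y ^+ 2 <= e ^+ 2 * (t * X) by rewrite ler_wpM2l // sqr_ge0.
  have : t * X <= d%:R * X by rewrite ler_wpM2r.
  rewrite exprMn; nra.
have st2 : \sum_q \sum_(j in [set j | S q j]) a j ^+ 2 <= d%:R * \sum_j a j ^+ 2.
  have -> : \sum_q \sum_(j in [set j | S q j]) a j ^+ 2
      = \sum_j \sum_(q in [set q | S q j]) a j ^+ 2.
    transitivity (\sum_q \sum_j (if S q j then a j ^+ 2 else 0)).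
      by apply: eq_bigr => q _; rewrite big_mkcond; apply: eq_bigr => j _; rewrite inE.
    rewrite exchange_big; apply: eq_bigr => j _; rewrite [RHS]big_mkcond.
    by apply: eq_bigr => q _; rewrite inE.
  rewrite mulr_sumr; apply: ler_sum => j _; rewrite sumr_const -[X in X <= _]mulr_natr mulrC.
  by apply: ler_wpM2r; [exact: sqr_ge0 | rewrite ler_nat].
rewrite /vnorm.
have hsum0 : 0 <= \sum_j a j ^+ 2 by apply: sumr_ge0 => j _; apply: sqr_ge0.
apply: (@le_trans _ _ (Num.sqrt (((d%:R * e) ^+ 2) * \sum_j a j ^+ 2))).
  rewrite ler_sqrt; last by rewrite mulr_ge0 ?sqr_ge0.
  apply: (le_trans (ler_sum _ (fun q _ => st1 q))).
  rewrite -mulr_sumr.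
  apply: (le_trans (ler_wpM2l _ st2)); first by rewrite mulr_ge0 ?sqr_ge0.
  by rewrite le_eqVlt; apply/orP; left; apply/eqP; ring.
by rewrite sqrtrM ?sqr_ge0 // sqrtr_sqr ger0_norm // mulr_ge0.
Qed.

Lemma vnorm_ge0 N (x : 'cV[C]_N) : 0 <= vnorm x.
Proof. exact: sqrtr_ge0. Qed.

Lemma vnorm0 N : vnorm (0 : 'cV[C]_N) = 0.
Proof.
rewrite /vnorm big1 ?sqrtr0 // => k _.
by rewrite mxE /cabs /= expr0n /= addr0 sqrtr0 expr0n.
Qed.

Lemma specnorm_le N (M : 'M[C]_N) (b : R) : 0 <= b ->
  (forall x, vnorm (M *m x) <= b * vnorm x) -> specnorm M <= b.
Proof.
move=> b0 hM; apply: reals.ge_sup.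
  exists (vnorm (M *m 0)); exists 0 => //.
  by rewrite /= vnorm0 ler01.
move=> _ [x hx <-]; apply: (le_trans (hM x)).
by rewrite -{2}(mulr1 b) ler_wpM2l.
Qed.
Lemma sum_g (k m : nat) : \sum_(b < m) (if (b < k)%N then 1 else (-1)^+b : C)
  = if (m <= k)%N then m%:R else k%:R + (if odd (m - k) then (-1)^+k else 0).
Proof.
elim: m => [|m IH]; first by rewrite big_ord0 leq0n.
rewrite big_ord_recr /= IH.
case: (ltngtP m k) => hmk.
- by rewrite natr1.
- rewrite -addrA; congr (_ + _).
  rewrite subSn ?(ltnW hmk) //= -{2}(subnKC (ltnW hmk)) exprD.
  rewrite -(signr_odd _ (m - k)); case: (odd (m - k)) => /=;
    rewrite ?expr0 ?expr1 ?mulr1 ?mulrN1 ?add0r //.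
  by rewrite subrr.
- by rewrite hmk subSn // subnn.
Qed.

Lemma sum_g_bound (k N : nat) : (k <= N)%N ->
  `|\sum_(b < N) (if (b < k)%N then 1 else (-1)^+b : C) - k%:R| <= 1.
Proof.
move=> hk; rewrite sum_g; case: ifP => h.
  have -> : N = k by apply/eqP; rewrite eqn_leq h hk.
  by rewrite subrr normr0 ler01.
rewrite addrAC subrr add0r; case: ifP => _; last by rewrite normr0 ler01.
by rewrite normrX normrN1 expr1n.
Qed.

Lemma normC_real (r : R) : `|r%:C| = `|r|%:C :> C.
Proof. by rewrite normc_def /= expr0n /= addr0 sqrtr_sqr. Qed.

Lemma norm_expi (t : R) : `|expi t| = 1 :> C.
Proof. by rewrite normc_def /= cos2Dsin2 sqrtr1. Qed.

Lemma norm_phase (z : C) : z != 0 -> `|phase z| = 1.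
Proof. move=> z0; rewrite /phase normf_div normr_id divff // normr_eq0 //. Qed.


Lemma entry_bound (B kk : nat) (z E : C) : z != 0 -> `|E| = 1 -> (kk <= 2 ^ B)%N ->
  `|(2 ^ B)%:R * cabs z - kk%:R| <= 1 ->
  `|(2 ^ B)%:R^-1 * (\sum_(b < 2 ^ B) (if (b < kk)%N then 1 else (-1) ^+ b))
      * (phase z * E) - z * E| <= (2 / (2 ^ B)%:R)%:C.
Proof.
move=> z0 E1 hkk hr.
set G := \sum_(b < 2 ^ B) _.
have hG := @sum_g_bound _ _ hkk; rewrite -/G in hG.
set N : C := (2 ^ B)%:R.
have N0 : N != 0 by rewrite /N pnatr_eq0 -lt0n expn_gt0.
have Ngt0 : 0 < N by rewrite /N ltr0n expn_gt0.
have hz : z = `|z| * phase z by rewrite /phase mulrC divfK // normr_eq0.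
have -> : N^-1 * G * (phase z * E) - z * E
    = (N^-1 * ((G - kk%:R) + (kk%:R - N * `|z|))) * phase z * E.
  by rewrite {2}hz; field.
rewrite !normrM E1 !normfV normr_id divff ?normr_eq0 // !mulr1 (gtr0_norm Ngt0).
have h2 : `|kk%:R - N * (`|z|)| <= 1 :> C.
  have -> : kk%:R - N * (`|z|) = (kk%:R - (2 ^ B)%:R * cabs z)%:C.
    by rewrite -(cabsE z) rmorphB rmorphM /= !rmorph_nat.
  by rewrite normC_real lecR distrC.
have : `|G - kk%:R + (kk%:R - N * (`|z|))| <= 2.
  apply: (le_trans (ler_normD _ _)).
  by rewrite -[2 : C]/(1 + 1); apply: lerD.
move=> h3.
rewrite rmorphM rmorphV /=; last by rewrite unitfE pnatr_eq0 -lt0n expn_gt0.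
rewrite !rmorph_nat [X in _ <= X]mulrC; apply: ler_wpM2l => //.
by rewrite invr_ge0 ltW.
Qed.

Lemma summxC (N M : nat) (I : Type) (r : seq I) (P : pred I) (E : I -> 'M[C]_(N, M)) i j :
  (\sum_(k <- r | P k) E k) i j = \sum_(k <- r | P k) E k i j.
Proof. exact: summxE. Qed.

End H.

Lemma size_filter_card N (P : pred 'I_N) : size [seq q <- enum 'I_N | P q] = #|[set q | P q]|.
Proof. by rewrite cardsE cardE /enum_mem -filter_predI; congr size; apply: eq_filter => x; rewrite /= !inE andbT. Qed.

Lemma padded_ex N d (P : pred 'I_N) (h : 'I_d -> 'I_N) : padded_list P h ->
  (#|[set q | P q]| <= d)%N -> forall x, P x -> exists p, h p = x.
Proof.
move=> [hinj hnth] hcard x Px.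
set s := [seq nat_of_ord q | q <- enum 'I_N & P q].
have xs : nat_of_ord x \in s by rewrite map_f // mem_filter Px mem_enum.
have hsz : size s = #|[set q | P q]| by rewrite size_map size_filter_card.
have hi : (index (nat_of_ord x) s < d)%N.
  by apply: leq_trans hcard; rewrite -hsz index_mem.
exists (Ordinal hi); apply: val_inj => /=.
rewrite hnth /=; first by rewrite nth_index.
by rewrite size_filter_card -hsz index_mem.
Qed.

Theorem mainTheorem3 (R : realType) (n d B : nat)
  (chi phi : 'I_(2 ^ n) -> 'cV[R[i]]_(2 ^ n)) (theta : 'I_(2 ^ n) -> R)
  (f : 'I_2 -> 'I_(2 ^ n) -> 'I_d -> 'I_(2 ^ n))
  (k : 'I_(2 ^ n) -> 'I_(2 ^ n) -> nat) :
  (0 < n)%N -> (0 < d)%N -> (0 < B)%N ->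
  orthonormal_fam chi -> orthonormal_fam phi ->
  (* d-sparsity *)
  (forall j, (#|[set q | cinner (phi q) (chi j) != 0%R]| <= d)%N) ->
  (forall q, (#|[set j | cinner (phi q) (chi j) != 0%R]| <= d)%N) ->
  (* padded index function f *)
  (forall j, padded_list (fun q => cinner (phi q) (chi j) != 0%R) (f side0 j)) ->
  (forall q, padded_list (fun j => cinner (phi q) (chi j) != 0%R) (f side1 q)) ->
  (* B-bit rounding k_{j,q} of 2^B |<phi_q|chi_j>| *)
  (forall j q, (k j q <= 2 ^ B)%N /\
     `|(2 ^ B)%:R * cabs (cinner (phi q) (chi j)) - (k j q)%:R| <= 1 :> R) ->
  let ip q j := cinner (phi q) (chi j) in
  (* (0,j) is incident to an edge ((0,j),(1,q)) of colour (c1,c2) *)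
  let inV (c1 c2 : 'I_d) (j : 'I_(2 ^ n)) :=
    [exists q, [&& ip q j != 0%R, f side0 j c1 == q & f side1 q c2 == j]] in
  let g (j : 'I_(2 ^ n)) (c1 : 'I_d) (b : nat) : R[i] :=
    if (b < k j (f side0 j c1))%N then 1 else (-1) ^+ b in
  let A : 'M[R[i]]_(2 ^ n) :=
    \sum_(j < 2 ^ n) \sum_(q < 2 ^ n)
       (ip q j * expi (- theta j)) *: delta_mx q j in
  let A' : 'M[R[i]]_(2 ^ n) :=
    \sum_(c1 < d) \sum_(c2 < d) \sum_(j < 2 ^ n | inV c1 c2 j)
       ((2 ^ B)%:R^-1 * (\sum_(b < 2 ^ B) g j c1 b)
         * (phase (ip (f side0 j c1) j) * expi (- theta j)))
         *: delta_mx (f side0 j c1) j in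
  specnorm (A' - A) <= 2 * (d ^ 2)%:R / (2 ^ B)%:R.
Proof.
move=> hn hd hB onc onp sp0 sp1 pad0 pad1 hk.
pose ip q j := cinner (phi q) (chi j).
pose inV (c1 c2 : 'I_d) (j : 'I_(2 ^ n)) :=
    [exists q, [&& ip q j != 0%R, f side0 j c1 == q & f side1 q c2 == j]].
pose g (j : 'I_(2 ^ n)) (c1 : 'I_d) (b : nat) : R[i] :=
    if (b < k j (f side0 j c1))%N then 1 else (-1) ^+ b.
pose A : 'M[R[i]]_(2 ^ n) :=
    \sum_(j < 2 ^ n) \sum_(q < 2 ^ n)
       (ip q j * expi (- theta j)) *: delta_mx q j.
pose A' : 'M[R[i]]_(2 ^ n) :=
    \sum_(c1 < d) \sum_(c2 < d) \sum_(j < 2 ^ n | inV c1 c2 j)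
       ((2 ^ B)%:R^-1 * (\sum_(b < 2 ^ B) g j c1 b)
         * (phase (ip (f side0 j c1) j) * expi (- theta j)))
         *: delta_mx (f side0 j c1) j.
change (specnorm (A' - A) <= 2 * (d ^ 2)%:R / (2 ^ B)%:R).
have eA : forall q j, A q j = ip q j * expi (- theta j).
  move=> q0 j0; rewrite /A; apply: etrans; [exact: summxC|]; cbv beta.
  rewrite (bigD1 j0) //= [X in _ + X]big1 ?addr0; last first.
    move=> j hj; apply: etrans; [exact: summxC|]; cbv beta.
    by rewrite big1 // => q _; rewrite !mxE [_ == j]eq_sym (negbTE hj) andbF mulr0.
  apply: etrans; [exact: summxC|]; cbv beta.
  rewrite (bigD1 q0) //= [X in _ + X]big1 ?addr0; last first.
    by move=> q hq; rewrite !mxE [_ == q]eq_sym (negbTE hq) mulr0.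
  by rewrite !mxE !eqxx mulr1.
have eA' : forall q0 j0, A' q0 j0 = \sum_(c1 < d) \sum_(c2 < d)
    (if inV c1 c2 j0 && (f side0 j0 c1 == q0) then
      (2 ^ B)%:R^-1 * (\sum_(b < 2 ^ B) g j0 c1 b)
         * (phase (ip (f side0 j0 c1) j0) * expi (- theta j0)) else 0).
  move=> q0 j0; rewrite /A'; apply: etrans; [exact: summxC|]; cbv beta.
  apply: eq_bigr => c1 _; apply: etrans; [exact: summxC|]; cbv beta.
  apply: eq_bigr => c2 _; apply: etrans; [exact: summxC|]; cbv beta.
  rewrite big_mkcond (bigD1 j0) //= [X in _ + X]big1 ?addr0; last first.
    by move=> j hj; case: ifP => // _; rewrite !mxE [_ == j]eq_sym (negbTE hj) andbF mulr0.
  case: ifP => h /=; last by rewrite ?andFb.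
  by rewrite !mxE eqxx andbT eq_sym; case: eqP; rewrite ?mulr1 ?mulr0.
set e : R := 2 / (2 ^ B)%:R.
have e0 : 0 <= e by rewrite /e divr_ge0 ?ler0n.
have hent : forall q j, `|(A' - A) q j| <= (e%:C)%C /\ ((A' - A) q j != 0 -> ip q j != 0).
  move=> q0 j0.
  have -> : (A' - A) q0 j0 = A' q0 j0 - A q0 j0 by rewrite !mxE.
  rewrite eA eA'.
  case: (eqVneq (ip q0 j0) 0) => hip.
    rewrite big1 ?hip ?mul0r ?subrr ?normr0 ?eqxx; first by split => //; rewrite ler0c.
    move=> c1 _; apply: big1 => c2 _; case: ifP => //.
    case/andP => /existsP [q /and3P [h1 /eqP h2 _]] /eqP h4.
    by rewrite -h2 h4 hip eqxx in h1.
  have [c1 hc1] := @padded_ex _ _ _ _ (pad0 j0) (sp0 j0) _ hip.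
  have [c2 hc2] := @padded_ex _ _ _ _ (pad1 q0) (sp1 q0) _ hip.
  have inj0 := (pad0 j0).1; have inj1 := (pad1 q0).1.
  rewrite (bigD1 c1) //= [X in _ + X - _]big1 ?addr0; last first.
    move=> c hc; apply: big1 => c' _; case: ifP => //; case/andP => _ /eqP hc'.
    by move: hc; rewrite -(inj0 _ _ (etrans hc' (esym hc1))) eqxx.
  rewrite (bigD1 c2) //= [X in _ + X - _]big1 ?addr0; last first.
    move=> c hc; case: ifP => //; case/andP => /existsP [q /and3P [_ /eqP h2 /eqP h3]] /eqP h4.
    move: hc; rewrite -h2 hc1 in h3.
    by rewrite (inj1 _ _ (etrans h3 (esym hc2))) eqxx.
  have hv : inV c1 c2 j0 by apply/existsP; exists q0; rewrite hip hc1 hc2 !eqxx.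
  rewrite hv hc1 eqxx /=.
  split; last by [].
  rewrite /g hc1.
  have [hk1 hk2] := hk j0 q0.
  exact: (@entry_bound _ _ _ _ _ hip (norm_expi _ _) hk1 hk2).
apply: (le_trans (@specnorm_le _ _ (A' - A) (d%:R * e) _ _)).
- by rewrite mulr_ge0.
- move=> x; apply: (@sparse_norm _ _ _ _ (fun q j => ip q j != 0) e e0).
  + by move=> q j; case: (hent q j).
  + by move=> q j; case: (hent q j).
  + exact: sp1.
  + exact: sp0.
- rewrite /e mulrA [d%:R * 2]mulrC ler_wpM2r ?invr_ge0 ?ler0n // ler_wpM2l // ler_nat.
  by rewrite -mulnn leq_pmulr.
Qed.
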